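(* For integers $r\geq1$, $p\geq2$, $k_1\geq2$ and $k_2,\ldots,k_r\geq1$, \[ \lim_{m\to\infty}\zeta^{\star}(k_1,\ldots,k_r,\{p\}^m)=\zeta^{\star}(k_1,\ldots,k_{r-1})+\sum_{n_1\geq\cdots\geq n_r\geq2}\frac{1}{n_1^{k_1}\cdots n_r^{k_r}}\prod_{l=2}^{n_r}\frac{l^p}{l^p-1}. \]
   Context: $\zeta^{\star}(k_1,\ldots,k_r)=\sum_{n_1\geq\cdots\geq n_r\geq 1}\frac{1}{n_1^{k_1}\cdots n_r^{k_r}}$ for $k_1\geq2$, $k_2,\ldots,k_r\geq1$; $\{p\}^m$ denotes $m$ consecutive arguments equal to $p$. For $r=1$, $\zeta^{\star}(k_1,\ldots,k_{r-1})$ is the empty value, interpreted as $1$. *)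

(* Defs.v *)
From Stdlib Require Import Reals List.
From Coquelicot Require Import Coquelicot.
Open Scope R_scope.

(* Truncated nested sum: for ks = [k1; ...; kr],
   nsum ks lo w N = sum_{N >= n1 >= ... >= nr >= lo} w(nr) / (n1^k1 ... nr^kr),
   and nsum [] lo w N = w N (so that with w = 1 the empty sum is 1). *)
Fixpoint nsum (ks : list nat) (lo : nat) (w : nat -> R) (N : nat) : R :=
  match ks with
  | nil => w N
  | k :: ks' => sum_n_m (fun n => / (INR n ^ k) * nsum ks' lo w n) lo N
  end.

Definition zeta_star (ks : list nat) : R :=
  real (Lim_seq (fun N => nsum ks 1 (fun _ => 1) N)).

(* prod_{l=2}^{n} l^p / (l^p - 1)  (empty product = 1 for n <= 1) *)
Fixpoint wprod (p n : nat) : R :=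
  match n with
  | O => 1
  | S n' => match n' with
            | O => 1
            | _ => wprod p n' * (INR n ^ p / (INR n ^ p - 1))
            end
  end.

Definition rhs_sum (ks : list nat) (p : nat) : R :=
  real (Lim_seq (fun N => nsum ks 2 (wprod p) N)).

(* Main.v *)
Require Import Defs.
From Stdlib Require Import Reals List Lia Lra Arith.
From Coquelicot Require Import Coquelicot.
Open Scope R_scope.

Lemma sR0 (f : nat -> R) lo N : (N < lo)%nat -> sum_n_m f lo N = 0.
Proof. intros H. rewrite sum_n_m_zero by exact H. reflexivity. Qed.

Lemma sRS (f : nat -> R) lo N : (lo <= S N)%nat -> sum_n_m f lo (S N) = sum_n_m f lo N + f (S N).
Proof. intros H. rewrite sum_n_Sm by exact H. reflexivity. Qed.

Lemma sSn (f : nat -> R) lo N : (lo <= N)%nat -> sum_n_m f lo N = f lo + sum_n_m f (S lo) N.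
Proof. intros H. rewrite sum_Sn_m by exact H. reflexivity. Qed.

Lemma sum_le_loc (f g : nat -> R) lo N :
  (forall n, (lo <= n <= N)%nat -> f n <= g n) -> sum_n_m f lo N <= sum_n_m g lo N.
Proof.
  intros H. induction N as [|N IH].
  - destruct lo. rewrite !sum_n_n. apply H; lia. rewrite !sR0 by lia. lra.
  - destruct (le_lt_dec lo (S N)).
    + rewrite !sRS by lia. apply Rplus_le_compat. apply IH; intros; apply H; lia. apply H; lia.
    + rewrite !sR0 by lia. lra.
Qed.

Lemma sum_nonneg_loc (f : nat -> R) lo N :
  (forall n, (lo <= n <= N)%nat -> 0 <= f n) -> 0 <= sum_n_m f lo N.
Proof.
  intros H. replace 0 with (sum_n_m (fun _ => 0) lo N).
  apply sum_le_loc; auto.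
  induction N as [|N IH].
  - destruct lo. rewrite !sum_n_n. reflexivity. rewrite !sR0 by lia. reflexivity.
  - destruct (le_lt_dec lo (S N)).
    + rewrite !sRS by lia. destruct (le_lt_dec lo N). rewrite IH; [lra|intros; apply H; lia].
      rewrite sR0 by lia. lra.
    + rewrite !sR0 by lia. lra.
Qed.

Lemma sum_lim_loc (u : nat -> nat -> R) (g : nat -> R) lo N :
  (forall n, (lo <= n <= N)%nat -> is_lim_seq (fun m => u m n) (g n)) ->
  is_lim_seq (fun m => sum_n_m (u m) lo N) (sum_n_m g lo N).
Proof.
  intros H. induction N as [|N IH].
  - destruct lo.
    + apply (is_lim_seq_ext (fun m => u m 0%nat)). intros m. rewrite sum_n_n. reflexivity.
      rewrite sum_n_n. apply H; lia.
    + apply (is_lim_seq_ext (fun m => 0)). intros m. rewrite sR0 by lia. reflexivity.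
      rewrite sR0 by lia. apply is_lim_seq_const.
  - destruct (le_lt_dec lo (S N)).
    + apply (is_lim_seq_ext (fun m => sum_n_m (u m) lo N + u m (S N))). intros m. rewrite sRS by lia. reflexivity.
      rewrite sRS by lia. apply is_lim_seq_plus'. apply IH; intros; apply H; lia. apply H; lia.
    + apply (is_lim_seq_ext (fun m => 0)). intros m. rewrite sR0 by lia. reflexivity.
      rewrite sR0 by lia. apply is_lim_seq_const.
Qed.

Lemma inv_nonneg x : 0 <= x -> 0 <= / x.
Proof.
  intros H. destruct (Req_dec x 0) as [->|Hx]. rewrite Rinv_0; lra.
  left. apply Rinv_0_lt_compat. lra.
Qed.

Lemma inv_pow_nonneg n k : 0 <= / (INR n ^ k).
Proof. apply inv_nonneg, pow_le, pos_INR. Qed.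

Lemma INR_ge1 n : (1 <= n)%nat -> 1 <= INR n.
Proof. intros H. apply (le_INR 1 n) in H. simpl in H. exact H. Qed.

Lemma inv_pow_le n a b : (1 <= n)%nat -> (b <= a)%nat -> / (INR n ^ a) <= / (INR n ^ b).
Proof.
  intros H1 H2. pose proof (INR_ge1 n H1).
  apply Rinv_le_contravar. apply pow_lt; lra. apply Rle_pow; auto.
Qed.

Lemma real_step M T a S' : 1 <= M -> 0 <= T -> 0 <= a -> a * M <= S' ->
  / (M ^ 2) * (T + a) + 2 * (T + a) / (M + 1) <= 2 * T / M + 2 * (/ (M ^ 2) * S').
Proof.
  intros HM HT Ha HS.
  assert (E : / (M ^ 2) * (T + a) + 2 * (T + a) / (M + 1) - (2 * T / M + 2 * (/ (M ^ 2) * S'))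
     = ((T + a) * (1 - M) + 2 * (a * M - S') * (M + 1)) / (M ^ 2 * (M + 1))) by (field; lra).
  assert (Hn : (T + a) * (1 - M) + 2 * (a * M - S') * (M + 1) <= 0) by nra.
  assert (Hd : 0 < M ^ 2 * (M + 1)) by (simpl; nra).
  assert (((T + a) * (1 - M) + 2 * (a * M - S') * (M + 1)) / (M ^ 2 * (M + 1)) <= 0).
  { unfold Rdiv. apply Rmult_le_0_r. lra. left. apply Rinv_0_lt_compat. lra. }
  lra.
Qed.

Lemma real_base M : 1 <= M -> / (M ^ 2) * 1 + 2 / (M + 1) <= 2 / M.
Proof.
  intros HM.
  assert (E : 2 / M - (/ (M ^ 2) * 1 + 2 / (M + 1)) = (M - 1) / (M ^ 2 * (M + 1))) by (field; lra).
  assert (0 <= (M - 1) / (M ^ 2 * (M + 1))).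
  { unfold Rdiv. apply Rmult_le_pos. lra. left. apply Rinv_0_lt_compat. simpl; nra. }
  lra.
Qed.

Definition oneR : nat -> R := fun _ => 1.

Lemma nsum_app K l lo w N : nsum (K ++ l) lo w N = nsum K lo (nsum l lo w) N.
Proof.
  revert N. induction K as [|k K IH]; intros N; simpl. reflexivity.
  apply sum_n_m_ext; intros n. rewrite IH. reflexivity.
Qed.

Lemma nsum_nonneg K lo w N : (forall n, 0 <= w n) -> 0 <= nsum K lo w N.
Proof.
  intros Hw. revert N. induction K as [|k K IH]; intros N; simpl. apply Hw.
  apply sum_nonneg_loc. intros n _. apply Rmult_le_pos. apply inv_pow_nonneg. apply IH.
Qed.

Lemma nsum_mono K lo w1 w2 N : (forall n, (lo <= n)%nat -> w1 n <= w2 n) ->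
  ((lo <= N)%nat \/ K <> nil) -> nsum K lo w1 N <= nsum K lo w2 N.
Proof.
  intros Hw. revert N. induction K as [|k K IH]; intros N HN; simpl.
  - destruct HN as [HN|HN]; [apply Hw; auto| congruence].
  - apply sum_le_loc. intros n Hn. apply Rmult_le_compat_l. apply inv_pow_nonneg.
    apply IH. left; lia.
Qed.

Lemma nsum_lim K lo (u : nat -> nat -> R) (w : nat -> R) N :
  (forall n, (lo <= n)%nat -> is_lim_seq (fun m => u m n) (w n)) ->
  ((lo <= N)%nat \/ K <> nil) ->
  is_lim_seq (fun m => nsum K lo (u m) N) (nsum K lo w N).
Proof.
  intros Hw. revert N. induction K as [|k K IH]; intros N HN; simpl.
  - destruct HN as [HN|HN]; [apply Hw; auto| congruence].
  - apply (sum_lim_loc (fun m n => / (INR n ^ k) * nsum K lo (u m) n)).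
    intros n Hn.
    apply (is_lim_seq_scal_l (fun m => nsum K lo (u m) n) (/ (INR n ^ k)) (nsum K lo w n)).
    apply IH. left; lia.
Qed.

Lemma nsum_incr K lo w N : K <> nil -> (forall n, 0 <= w n) ->
  nsum K lo w N <= nsum K lo w (S N).
Proof.
  intros HK Hw. destruct K as [|k K]; [congruence|]. simpl.
  destruct (le_lt_dec lo (S N)).
  - rewrite (sRS _ lo N) by lia.
    assert (0 <= / (INR (S N) ^ k) * nsum K lo w (S N)).
    { apply Rmult_le_pos. apply inv_pow_nonneg. apply nsum_nonneg; auto. }
    lra.
  - rewrite !sR0 by lia. lra.
Qed.

Lemma nsum_scal K lo w c N : nsum K lo (fun n => c * w n) N = c * nsum K lo w N.
Proof.
  revert N. induction K as [|k K IH]; intros N; simpl. reflexivity.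
  transitivity (sum_n_m (fun n => c * (/ (INR n ^ k) * nsum K lo w n)) lo N).
  apply sum_n_m_ext. intros n. rewrite IH. rewrite <- !Rmult_assoc, (Rmult_comm c). reflexivity.
  apply (sum_n_m_mult_l (K := R_Ring)).
Qed.

Lemma nsum_exp2 k1 ks w N : (2 <= k1)%nat -> (forall n, 0 <= w n) ->
  nsum (k1 :: ks) 1 w N <= nsum (2%nat :: ks) 1 w N.
Proof.
  intros Hk Hw. cbn [nsum]. apply sum_le_loc. intros n Hn.
  apply Rmult_le_compat_r. apply nsum_nonneg; auto. apply inv_pow_le; lia.
Qed.

Lemma step_bound k ks : (1 <= k)%nat -> forall N,
  nsum (2%nat :: k :: ks) 1 oneR N + 2 * nsum (k :: ks) 1 oneR N / INR (S N)
  <= 2 * nsum (2%nat :: ks) 1 oneR N.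
Proof.
  intros Hk N. induction N as [|N IH].
  - simpl. rewrite !sR0 by lia. unfold Rdiv. lra.
  - cbn [nsum] in *. rewrite !(sRS _ 1 N) by lia.
    set (T := sum_n_m (fun n => / (INR n ^ k) * nsum ks 1 oneR n) 1 N) in *.
    set (S' := nsum ks 1 oneR (S N)).
    set (a := / (INR (S N) ^ k) * S').
    set (M := INR (S N)).
    assert (HM : 1 <= M) by (apply INR_ge1; lia).
    assert (HS' : 0 <= S') by (apply nsum_nonneg; unfold oneR; intros; lra).
    assert (HT : 0 <= T).
    { apply sum_nonneg_loc. intros. apply Rmult_le_pos. apply inv_pow_nonneg. apply nsum_nonneg; unfold oneR; intros; lra. }
    assert (Ha : 0 <= a) by (apply Rmult_le_pos; [apply inv_pow_nonneg| auto]).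
    assert (HaM : a * M <= S').
    { unfold a. assert (/ (INR (S N) ^ k) <= / (INR (S N) ^ 1)) by (apply inv_pow_le; lia).
      fold M in H. rewrite pow_1 in H.
      assert (/ M * M = 1) by (field; lra).
      assert (/ (M ^ k) * M <= 1) by nra.
      fold M. replace (/ M ^ k * S' * M) with ((/ M ^ k * M) * S') by ring. pose proof (Rmult_le_compat_r S' _ _ HS' H1). lra. }
    pose proof (real_step M T a S' HM HT Ha HaM) as R.
    rewrite S_INR. fold M.
    set (s2 := sum_n_m (fun n => / (INR n ^ 2) * sum_n_m (fun n0 => / (INR n0 ^ k) * nsum ks 1 oneR n0) 1 n) 1 N) in *.
    set (s3 := sum_n_m (fun n => / (INR n ^ 2) * nsum ks 1 oneR n) 1 N) in *.
    fold M in IH. fold a. fold S'.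
    nra.
Qed.

Lemma base_bound N : nsum (2%nat :: nil) 1 oneR N + 2 / INR (S N) <= 2.
Proof.
  induction N as [|N IH].
  - simpl. rewrite sR0 by lia. lra.
  - cbn [nsum] in *. rewrite (sRS _ 1 N) by lia.
    pose proof (real_base (INR (S N)) (INR_ge1 (S N) ltac:(lia))).
    rewrite (S_INR (S N)). unfold oneR in *. lra.
Qed.

Lemma bound2 ks : List.Forall (fun k => (1 <= k)%nat) ks -> forall N,
  nsum (2%nat :: ks) 1 oneR N <= 2 ^ S (length ks).
Proof.
  induction ks as [|k ks IH]; intros Hf N.
  - pose proof (base_bound N).
    assert (0 <= 2 / INR (S N)).
    { unfold Rdiv. apply Rmult_le_pos. lra. apply inv_nonneg, pos_INR. }
    change (2 ^ S (length (@nil nat))) with (2 * 1). lra.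
  - inversion Hf as [|? ? Hk Hf']. subst.
    pose proof (step_bound k ks Hk N).
    assert (0 <= 2 * nsum (k :: ks) 1 oneR N / INR (S N)).
    { unfold Rdiv. apply Rmult_le_pos. apply Rmult_le_pos. lra. apply nsum_nonneg; unfold oneR; intros; lra.
      apply inv_nonneg, pos_INR. }
    pose proof (IH Hf' N).
    change (2 ^ S (length (k :: ks))) with (2 * 2 ^ S (length ks)). lra.
Qed.

Lemma sum_plus_R (f g : nat -> R) lo N :
  sum_n_m (fun n => f n + g n) lo N = sum_n_m f lo N + sum_n_m g lo N.
Proof. exact (sum_n_m_plus (G:=R_AbelianMonoid) f g lo N). Qed.

Lemma nsum_split K w N : K <> nil -> (1 <= N)%nat ->
  nsum K 1 w N = nsum (removelast K) 1 (fun _ => w 1%nat) N + nsum K 2 w N.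
Proof.
  revert N. induction K as [|k K IH]; intros N HK HN; [congruence|].
  destruct K as [|k' K''].
  - simpl. rewrite (sSn _ 1 N) by lia. simpl. rewrite pow1, Rinv_1. ring.
  - change (removelast (k :: k' :: K'')) with (k :: removelast (k' :: K'')).
    remember (k' :: K'') as K' eqn:EK.
    assert (HK' : K' <> nil) by (subst; congruence).
    cbn [nsum].
    rewrite (sum_n_m_ext_loc _ (fun n => / (INR n ^ k) * nsum (removelast K') 1 (fun _ => w 1%nat) n
        + / (INR n ^ k) * nsum K' 2 w n)).
    2:{ intros n Hn. cbv beta. rewrite IH by (auto || lia). apply Rmult_plus_distr_l. }
    rewrite sum_plus_R. f_equal.
    rewrite (sSn _ 1 N) by lia. subst K'. cbn [nsum]. rewrite (sR0 _ 2 1) by lia. rewrite Rmult_0_r, Rplus_0_l. reflexivity.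
Qed.

Lemma W_SS p n : wprod p (S (S n)) = wprod p (S n) * (INR (S (S n)) ^ p / (INR (S (S n)) ^ p - 1)).
Proof. reflexivity. Qed.

Lemma ypos p n : (2 <= p)%nat -> 4 <= INR (S (S n)) ^ p.
Proof.
  intros Hp. assert (Hx : 2 <= INR (S (S n))).
  { rewrite !S_INR. pose proof (pos_INR n). lra. }
  assert (INR (S (S n)) ^ 2 <= INR (S (S n)) ^ p) by (apply Rle_pow; [lra|lia]).
  assert (INR (S (S n)) ^ 2 = INR (S (S n)) * INR (S (S n))) by ring. nra.
Qed.

Lemma W_ge1 p n : (2 <= p)%nat -> 1 <= wprod p n.
Proof.
  intros Hp. induction n as [|n IH]. simpl; lra.
  destruct n. simpl; lra.
  rewrite W_SS. pose proof (ypos p n Hp).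
  set (y := INR (S (S n)) ^ p) in *.
  assert (E : y / (y - 1) = 1 + / (y - 1)) by (field; lra).
  assert (0 < / (y - 1)) by (apply Rinv_0_lt_compat; lra).
  rewrite E. nra.
Qed.

Lemma W_le p n : (2 <= p)%nat -> (1 <= n)%nat -> wprod p n <= 2 * INR n / INR (S n).
Proof.
  intros Hp. induction n as [|n IH]; intros Hn. lia.
  destruct n. simpl. lra.
  rewrite W_SS. specialize (IH ltac:(lia)).
  pose proof (ypos p n Hp). pose proof (W_ge1 p (S n) Hp).
  set (m := INR (S n)) in *.
  assert (Hm : 1 <= m) by (apply INR_ge1; lia).
  assert (E1 : INR (S (S n)) = m + 1) by (unfold m; rewrite S_INR; reflexivity).
  assert (E2 : INR (S (S (S n))) = m + 2) by (rewrite S_INR, E1; ring).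
  rewrite E2. rewrite E1 in H, IH |- *.
  set (y := (m + 1) ^ p) in *.
  assert (Hy : (m + 1) ^ 2 <= y) by (apply Rle_pow; [lra|lia]).
  set (Y := (m + 1) ^ 2) in *.
  assert (HY : Y = m * (m + 2) + 1) by (unfold Y; ring).
  assert (Hq : y / (y - 1) <= Y / (Y - 1)).
  { assert (y / (y - 1) - Y / (Y - 1) = (Y - y) / ((y - 1) * (Y - 1))) by (field; nra).
    assert ((Y - y) / ((y - 1) * (Y - 1)) <= 0).
    { unfold Rdiv. apply Rmult_le_0_r. lra. left. apply Rinv_0_lt_compat. nra. }
    lra. }
  assert (Hq0 : 0 <= y / (y - 1)).
  { unfold Rdiv. apply Rmult_le_pos. lra. left; apply Rinv_0_lt_compat; lra. }
  assert (wprod p (S n) * (y / (y - 1)) <= 2 * m / (m + 1) * (Y / (Y - 1))).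
  { apply Rmult_le_compat; try lra. }
  assert (2 * m / (m + 1) * (Y / (Y - 1)) = 2 * (m + 1) / (m + 2)) by (rewrite HY; field; nra).
  lra.
Qed.

Lemma W_le2 p n : (2 <= p)%nat -> wprod p n <= 2.
Proof.
  intros Hp. destruct n. simpl; lra.
  pose proof (W_le p (S n) Hp ltac:(lia)).
  assert (2 * INR (S n) / INR (S (S n)) <= 2).
  { rewrite (S_INR (S n)). pose proof (pos_INR (S n)).
    assert (2 * INR (S n) / (INR (S n) + 1) = 2 - 2 / (INR (S n) + 1)) by (field; lra).
    assert (0 <= 2 / (INR (S n) + 1)).
    { unfold Rdiv. apply Rmult_le_pos. lra. left; apply Rinv_0_lt_compat; lra. }
    lra. }
  lra.
Qed.

Lemma W_fix p n : (2 <= p)%nat -> (1 <= n)%nat ->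
  sum_n_m (fun j => / (INR j ^ p) * wprod p j) 1 n = wprod p n.
Proof.
  intros Hp. induction n as [|n IH]; intros Hn. lia.
  match goal with |- ?a = ?b => change (@eq R a b) end.
  destruct n.
  - rewrite sum_n_n. simpl. rewrite pow1, Rinv_1. ring.
  - rewrite sRS by lia. rewrite IH by lia. rewrite W_SS.
    pose proof (ypos p n Hp).
    set (y := INR (S (S n)) ^ p) in *. field. lra.
Qed.

Lemma W_rec p n : (2 <= p)%nat -> (1 <= n)%nat ->
  wprod p (S n) = wprod p n + / (INR (S n) ^ p) * wprod p (S n).
Proof.
  intros Hp Hn. rewrite <- (W_fix p (S n)) at 1 by lia. rewrite sRS by lia.
  rewrite W_fix by lia. reflexivity.
Qed.

Definition Hseq p m n := nsum (repeat p m) 1 oneR n.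

Lemma H_S p m n : Hseq p (S m) n = sum_n_m (fun j => / (INR j ^ p) * Hseq p m j) 1 n.
Proof. reflexivity. Qed.

Lemma H_nonneg p m n : 0 <= Hseq p m n.
Proof. apply nsum_nonneg. unfold oneR; intros; lra. Qed.

Lemma H_le_W p m n : (2 <= p)%nat -> Hseq p m n <= wprod p n.
Proof.
  intros Hp. revert n. induction m as [|m IH]; intros n.
  - apply W_ge1; auto.
  - destruct n.
    + rewrite H_S, sR0 by lia. pose proof (W_ge1 p 0 Hp). lra.
    + rewrite H_S, <- (W_fix p (S n)) by lia. apply sum_le_loc. intros j Hj.
      apply Rmult_le_compat_l. apply inv_pow_nonneg. apply IH.
Qed.

Lemma H_incr p m n : (1 <= n)%nat -> Hseq p m n <= Hseq p (S m) n.
Proof.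
  revert n. induction m as [|m IH]; intros n Hn.
  - rewrite H_S. rewrite (sSn _ 1 n) by lia.
    change (Hseq p 0 n) with 1. change (Hseq p 0 1%nat) with 1.
    simpl INR. rewrite pow1, Rinv_1.
    assert (0 <= sum_n_m (fun j => / (INR j ^ p) * Hseq p 0 j) 2 n).
    { apply sum_nonneg_loc. intros. apply Rmult_le_pos. apply inv_pow_nonneg. apply H_nonneg. }
    lra.
  - rewrite (H_S p (S m)), H_S. apply sum_le_loc. intros j Hj.
    apply Rmult_le_compat_l. apply inv_pow_nonneg. apply IH. lia.
Qed.

Lemma H_one p m : Hseq p m 1 = 1.
Proof.
  induction m as [|m IH]. reflexivity.
  rewrite H_S, sum_n_n, IH. simpl INR. rewrite pow1, Rinv_1. ring.
Qed.

Lemma H_lim p n : (2 <= p)%nat -> (1 <= n)%nat ->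
  is_lim_seq (fun m => Hseq p m n) (wprod p n).
Proof.
  intros Hp. induction n as [|n IH]; intros Hn. lia.
  destruct n.
  - apply (is_lim_seq_ext (fun _ => 1)). intros m. rewrite H_one. reflexivity.
    apply is_lim_seq_const.
  - specialize (IH ltac:(lia)).
    destruct (ex_finite_lim_seq_incr (fun m => Hseq p m (S (S n))) (wprod p (S (S n))))
      as [A HA].
    { intros m. apply H_incr. lia. }
    { intros m. apply H_le_W; auto. }
    set (x := / (INR (S (S n)) ^ p)).
    assert (Hrec : forall m, Hseq p (S m) (S (S n)) = Hseq p (S m) (S n) + x * Hseq p m (S (S n))).
    { intros m. rewrite !H_S. rewrite (sRS _ 1 (S n)) by lia. reflexivity. }
    assert (L1 : is_lim_seq (fun m => Hseq p (S m) (S (S n))) A).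
    { apply (is_lim_seq_incr_1 (fun m => Hseq p m (S (S n))) A). exact HA. }
    assert (L2 : is_lim_seq (fun m => Hseq p (S m) (S (S n))) (wprod p (S n) + x * A)).
    { apply (is_lim_seq_ext (fun m => Hseq p (S m) (S n) + x * Hseq p m (S (S n)))).
      intros m; symmetry; apply Hrec.
      apply is_lim_seq_plus'.
      apply (is_lim_seq_incr_1 (fun m => Hseq p m (S n)) (wprod p (S n))). exact IH.
      apply (is_lim_seq_scal_l _ x A). exact HA. }
    pose proof (is_lim_seq_unique _ _ L1) as U1.
    pose proof (is_lim_seq_unique _ _ L2) as U2.
    assert (EA : A = wprod p (S n) + x * A).
    { apply Rbar_finite_eq. rewrite <- U1, <- U2. reflexivity. }
    pose proof (W_rec p (S n) Hp ltac:(lia)) as EW. fold x in EW.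
    pose proof (ypos p n Hp).
    assert (Hx : x < 1).
    { unfold x. rewrite <- Rinv_1. apply Rinv_lt_contravar; lra. }
    assert (A = wprod p (S (S n))).
    { assert (Hz : (A - wprod p (S (S n))) * (1 - x) = 0) by (replace ((A - wprod p (S (S n))) * (1 - x)) with ((A - x * A) - (wprod p (S (S n)) - x * wprod p (S (S n)))) by ring; lra).
      apply Rmult_integral in Hz. destruct Hz; lra. }
    subst A. exact HA.
Qed.

Lemma lim_real u : ex_finite_lim_seq u -> is_lim_seq u (real (Lim_seq u)).
Proof. intros [l Hl]. rewrite (is_lim_seq_unique _ _ Hl). exact Hl. Qed.

Lemma double_lim (a : nat -> nat -> R) (L z : nat -> R) (Z : R) :
  (forall m, is_lim_seq (a m) (z m)) -> (forall m N, a m N <= a m (S N)) ->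
  (forall m N, a m N <= L N) -> is_lim_seq L Z -> (forall N, L N <= L (S N)) ->
  (forall N, is_lim_seq (fun m => a m N) (L N)) -> is_lim_seq z Z.
Proof.
  intros Ha Hinc Hle HL HLinc Hcol.
  assert (Up : forall m, z m <= Z).
  { intros m. assert (Rbar_le (z m) Z).
    { apply (is_lim_seq_le (a m) (fun _ => Z)).
      intros N. pose proof (is_lim_seq_incr_compare L Z HL HLinc N). pose proof (Hle m N). lra.
      apply Ha. apply is_lim_seq_const. }
    exact H. }
  apply is_lim_seq_spec. intros eps.
  destruct (proj2 (is_lim_seq_spec _ _) HL (pos_div_2 eps)) as [N0 HN0].
  specialize (HN0 N0 (le_n _)).
  destruct (proj2 (is_lim_seq_spec _ _) (Hcol N0) (pos_div_2 eps)) as [m0 Hm0].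
  exists m0. intros m Hm. specialize (Hm0 m Hm). simpl in HN0, Hm0.
  pose proof (is_lim_seq_incr_compare (a m) (z m) (Ha m) (Hinc m) N0).
  pose proof (Up m).
  apply Rabs_def1; apply Rabs_def2 in HN0; apply Rabs_def2 in Hm0; destruct HN0, Hm0; lra.
Qed.

Theorem proposition6p1 (k1 : nat) (ks : list nat) (p : nat) :
  (2 <= k1)%nat -> List.Forall (fun k => (1 <= k)%nat) ks -> (2 <= p)%nat ->
  is_lim_seq (fun m : nat => zeta_star (app (k1 :: ks) (List.repeat p m)))
    (Finite (zeta_star (removelast (k1 :: ks)) + rhs_sum (k1 :: ks) p)).
Proof.
  intros Hk1 Hks Hp.
  set (K := k1 :: ks).
  assert (HK : K <> nil) by (unfold K; congruence).
  set (Mb := 2 * 2 ^ S (length ks)).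
  assert (Bnd : forall w, (forall n, 0 <= w n <= 2) -> forall N, nsum K 1 w N <= Mb).
  { intros w Hw N.
    apply Rle_trans with (nsum K 1 (fun n => 2 * oneR n) N).
    { apply nsum_mono; auto. intros n _. unfold oneR. specialize (Hw n). lra. }
    rewrite nsum_scal. unfold Mb. apply Rmult_le_compat_l. lra.
    apply Rle_trans with (nsum (2%nat :: ks) 1 oneR N).
    apply nsum_exp2; auto. unfold oneR; intros; lra.
    apply bound2; auto. }
  set (a := fun m N => nsum K 1 (Hseq p m) N).
  set (L := fun N => nsum K 1 (wprod p) N).
  assert (WB : forall n, 0 <= wprod p n <= 2).
  { intros n. pose proof (W_ge1 p n Hp). pose proof (W_le2 p n Hp). lra. }
  assert (Wnn : forall n, 0 <= wprod p n) by (intros n; apply WB).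
  assert (Lb : forall N, L N <= Mb) by (intros; apply Bnd; auto).
  assert (Linc : forall N, L N <= L (S N)) by (intros; apply nsum_incr; auto).
  set (A := fun N => nsum (removelast K) 1 oneR N).
  set (B := fun N => nsum K 2 (wprod p) N).
  assert (Split : forall N, (1 <= N)%nat -> L N = A N + B N).
  { intros N HN. unfold L, A, B. rewrite nsum_split by auto. reflexivity. }
  assert (Ann : forall N, 0 <= A N) by (intros; apply nsum_nonneg; unfold oneR; intros; lra).
  assert (Bnn : forall N, 0 <= B N) by (intros; apply nsum_nonneg; auto).
  assert (Ainc : forall N, A N <= A (S N)).
  { intros N. unfold A. destruct (removelast K) as [|x l]. cbn [nsum]; unfold oneR; lra.
    apply nsum_incr. congruence. unfold oneR; intros; lra. }
  assert (Binc : forall N, B N <= B (S N)) by (intros; apply nsum_incr; auto).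
  assert (HA : ex_finite_lim_seq A).
  { apply (ex_finite_lim_seq_incr A Mb Ainc). intros N.
    pose proof (Ainc N). pose proof (Split (S N) ltac:(lia)). pose proof (Lb (S N)).
    pose proof (Bnn (S N)). lra. }
  assert (HB : ex_finite_lim_seq B).
  { apply (ex_finite_lim_seq_incr B Mb Binc). intros N.
    pose proof (Binc N). pose proof (Split (S N) ltac:(lia)). pose proof (Lb (S N)).
    pose proof (Ann (S N)). lra. }
  assert (HLZ : is_lim_seq L (zeta_star (removelast K) + rhs_sum K p)).
  { apply (is_lim_seq_incr_1 L).
    apply (is_lim_seq_ext (fun N => A (S N) + B (S N))).
    intros N. symmetry. apply Split. lia.
    apply is_lim_seq_plus'.
    apply (is_lim_seq_incr_1 A). apply lim_real. exact HA.
    apply (is_lim_seq_incr_1 B). apply lim_real. exact HB. }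
  apply (double_lim a L _ _); auto.
  - intros m. unfold zeta_star.
    rewrite (Lim_seq_ext _ (a m)).
    2:{ intros N. unfold a, Hseq. rewrite nsum_app. reflexivity. }
    apply lim_real. apply (ex_finite_lim_seq_incr (a m) Mb).
    + intros N. apply nsum_incr; auto. intros; apply H_nonneg.
    + intros N. apply Bnd. intros n. split. apply H_nonneg.
      pose proof (H_le_W p m n Hp). pose proof (WB n). lra.
  - intros m N. apply nsum_incr; auto. intros; apply H_nonneg.
  - intros m N. apply nsum_mono; auto. intros n _. apply H_le_W; auto.
  - intros N. apply nsum_lim; auto. intros n Hn. apply H_lim; auto.
Qed.
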